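(* Let $\mathcal{T}$ be a finite total order, $\mathcal{G}$ a finite grid poset, $S\subseteq\mathcal{T}\times\mathcal{G}$ a spread, $A=\min S$ and $B=\max S$ (so $S=\uparrow A\cap\downarrow B$). Let \[ \mathcal{Q}=\pi_0\big(\{0\}\cup A\cup(A+e_0)\cup(B+e_0)\cup(B+2e_0)\big)\times\mathcal{G}\subseteq\mathcal{T}\times\mathcal{G}, \] where $0$ is the minimum of $\mathcal{T}\times\mathcal{G}$. Then $\mathcal{Q}$ contains $\min S$ and $\operatorname{cover}S$, and, for every spread $R$ such that $\mathbb{k}_R$ is a direct summand of the domain of a minimal spread-radical approximation of $\mathbb{k}_S$, $\mathcal{Q}$ contains $\min R$ and $\operatorname{cover}R$.
   Context: Fix a field $\mathbb{k}$. Identify $\mathcal{T}=[m_0]$, $\mathcal{G}=[m_1]\times\cdots\times[m_n]$ ($[m]=\{0<\dots<m-1\}$), with product order; $\pi_0$ is projection to $\mathcal{T}$. $x+e_0$ replaces the $0$-th coordinate of $x$ by $\min(m_0-1,\pi_0(x)+1)$; $B+2e_0=(B+e_0)+e_0$; $X+e_0=\{x+e_0:x\in X\}$. $\uparrow X,\downarrow X$ are the upset and downset generated by $X$; $\operatorname{cover}X=\min(\uparrow X\setminus X)$. A spread is a nonempty convex zigzag-connected subset; $\mathbb{k}_R$ its indicator representation in $\operatorname{rep}(\mathcal{T}\times\mathcal{G})$ (functors to finite-dimensional vector spaces). In the full subcategory $\mathcal{C}$ of finite direct sums of spread representations, the radical $\operatorname{rad}_\mathcal{C}(X,Y)$ is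 the additive subfunctor of Hom consisting of non-isomorphisms between indecomposables; a minimal spread-radical approximation of $M\in\mathcal{C}$ is a right minimal morphism $\rho:C\to M$, $C\in\mathcal{C}$, such that for every $A'\in\mathcal{C}$ the image of $\operatorname{Hom}(A',C)\to\operatorname{Hom}(A',M)$ equals $\operatorname{rad}_\mathcal{C}(A',M)$. *)

(* Defs.v *)
From mathcomp Require Import all_boot all_algebra.
Set Implicit Arguments.
Unset Strict Implicit.
Unset Printing Implicit Defensive.
Import GRing.Theory.
Local Open Scope ring_scope.

(* Poset T x G with T = [m0] = 'I_m0 and G = [m_1] x ... x [m_n]
   encoded as dependent finite functions i : 'I_n -> 'I_(m i). *)
Section Poset.
Variables (m0 n : nat) (m : 'I_n -> nat).

Definition gridG := {dffun forall i : 'I_n, 'I_(m i)}.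
Definition pt := ('I_m0 * gridG)%type.

Definition ple (x y : pt) : bool :=
  (x.1 <= y.1)%N && [forall i, (x.2 i <= y.2 i)%N].

Definition pi0 (x : pt) : 'I_m0 := x.1.

(* capped successor in T : t |-> min(m0-1, t+1) *)
Definition succT (t : 'I_m0) : 'I_m0 := insubd t t.+1.
Definition shift0 (x : pt) : pt := (succT x.1, x.2).

Definition upset (X : {set pt}) : {set pt} :=
  [set y | [exists x in X, ple x y]].
Definition downset (X : {set pt}) : {set pt} :=
  [set y | [exists x in X, ple y x]].
Definition pmin (X : {set pt}) : {set pt} :=
  [set x in X | [forall y in X, ple y x ==> (y == x)]].
Definition pmax (X : {set pt}) : {set pt} :=
  [set x in X | [forall y in X, ple x y ==> (y == x)]].
Definition pcover (X : {set pt}) : {set pt} := pmin (upset X :\: X).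

Definition comparable (x y : pt) : bool := ple x y || ple y x.

Definition convex (X : {set pt}) : Prop :=
  forall x y z, x \in X -> z \in X -> ple x y -> ple y z -> y \in X.
Definition zigzag_connected (X : {set pt}) : Prop :=
  forall x y, x \in X -> y \in X ->
    exists p : seq pt, [/\ path comparable x p, last x p = y & all (mem X) p].
Definition spread (X : {set pt}) : Prop :=
  X != set0 /\ convex X /\ zigzag_connected X.

(* ---- representations of T x G over a field F ----
   A representation assigns F^(rdim x) to each point and a matrix
   rmap x y : 'M_(rdim x, rdim y) (row-vector convention: v |-> v *m rmap x y)
   to each relation x <= y (values for non-comparable pairs are irrelevant). *)
Variable F : fieldType.

Record rep := Rep { rdim : pt -> nat; rmap : forall x y : pt, 'M[F]_(rdim x, rdim y) }.

Definition is_rep (V : rep) : Prop :=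
  (forall x, rmap V x x = 1%:M) /\
  (forall x y z, ple x y -> ple y z -> rmap V x z = rmap V x y *m rmap V y z).

Definition rhom (V W : rep) := forall x : pt, 'M[F]_(rdim V x, rdim W x).

Definition is_hom (V W : rep) (f : rhom V W) : Prop :=
  forall x y, ple x y -> rmap V x y *m f y = f x *m rmap W x y.

(* comp f g = g o f *)
Definition comp (U V W : rep) (f : rhom U V) (g : rhom V W) : rhom U W :=
  fun x => f x *m g x.
Definition hid (V : rep) : rhom V V := fun x => 1%:M.
Definition heq (V W : rep) (f g : rhom V W) : Prop := forall x, f x = g x.

Definition is_iso (V W : rep) (f : rhom V W) : Prop :=
  is_hom f /\ exists g : rhom W V,
    [/\ is_hom g, heq (comp f g) (hid V) & heq (comp g f) (hid W)].

Definition direct_summand (V W : rep) : Prop :=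
  exists (i : rhom V W) (p : rhom W V), [/\ is_hom i, is_hom p & heq (comp i p) (hid V)].

Definition spread_rep (R : {set pt}) : rep :=
  @Rep (fun x => nat_of_bool (x \in R))
       (fun x y => if (x \in R) && (y \in R) then const_mx 1 else 0).

Definition ddim (s : seq {set pt}) (x : pt) (i : 'I_(size s)) : nat :=
  nat_of_bool (x \in nth set0 s i).

Definition dsum (s : seq {set pt}) : rep :=
  @Rep (fun x => (\sum_(i < size s) @ddim s x i)%N)
       (fun x y => mxblock (p_ := @ddim s x) (q_ := @ddim s y)
          (fun i j => if (i == j) && (x \in nth set0 s i) && (y \in nth set0 s j)
                      then const_mx 1 else 0)).

Definition incl (s : seq {set pt}) (i : 'I_(size s)) :
  rhom (spread_rep (nth set0 s i)) (dsum s) :=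
  fun x => mxrow (q_ := @ddim s x) (fun j => if i == j then const_mx 1 else 0).
Definition proj (s : seq {set pt}) (j : 'I_(size s)) :
  rhom (dsum s) (spread_rep (nth set0 s j)) :=
  fun x => mxcol (p_ := @ddim s x) (fun i => if i == j then const_mx 1 else 0).

(* the radical of the category C of finite direct sums of spread
   representations: a morphism lies in the radical iff all of its components
   between indecomposable summands are non-isomorphisms *)
Definition in_rad (s t : seq {set pt}) (f : rhom (dsum s) (dsum t)) : Prop :=
  forall (i : 'I_(size s)) (j : 'I_(size t)),
    ~ is_iso (comp (incl i) (comp f (proj j))).

Definition right_minimal (s t : seq {set pt}) (rho : rhom (dsum s) (dsum t)) : Prop :=
  forall phi : rhom (dsum s) (dsum s), is_hom phi -> heq (comp phi rho) rho -> is_iso phi.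

Definition min_spread_rad_approx (s t : seq {set pt}) (rho : rhom (dsum s) (dsum t)) : Prop :=
  [/\ (forall R, R \in s -> spread R), is_hom rho, right_minimal rho &
    forall s' : seq {set pt}, (forall R, R \in s' -> spread R) ->
      forall g : rhom (dsum s') (dsum t), is_hom g ->
        (in_rad g <-> exists h : rhom (dsum s') (dsum s), is_hom h /\ heq g (comp h rho))].

Definition Qset (S : {set pt}) : {set pt} :=
  let A := pmin S in let B := pmax S in
  let X := pmin setT :|: A :|: shift0 @: A :|: shift0 @: B :|: shift0 @: (shift0 @: B) in
  [set x : pt | x.1 \in pi0 @: X].

End Poset.

(* Main.v *)
From mathcomp Require Import all_boot all_algebra.
Require Import Defs.
Set Implicit Arguments.
Unset Strict Implicit.
Unset Printing Implicit Defensive.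
Import GRing.Theory.

Section MxBool.
Local Open Scope ring_scope.
Variable F : fieldType.

Definition msum (a b : nat) (M : 'M[F]_(a, b)) : F := \sum_i \sum_j M i j.

Lemma msumE00 b (M : 'M[F]_(0, b)) : msum M = 0.
Proof. by rewrite /msum big_ord0. Qed.
Lemma msumE0 a (M : 'M[F]_(a, 0)) : msum M = 0.
Proof. by rewrite /msum big1 // => i _; rewrite big_ord0. Qed.
Lemma msumE1 (M : 'M[F]_(1, 1)) : msum M = M ord0 ord0.
Proof. by rewrite /msum !big_ord1. Qed.

Lemma msum0d (a b : bool) (M : 'M[F]_(a, b)) : ~~ (a && b) -> msum M = 0.
Proof.
by case: a M; case: b => M //= _; rewrite ?msumE00 ?msumE0.
Qed.

Lemma mx01 (a b : bool) (M : 'M[F]_(a, b)) : M = const_mx (msum M).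
Proof.
case: a M; case: b => M; try by rewrite [LHS]flatmx0 [RHS]flatmx0.
- apply/matrixP => i j; rewrite !mxE /= msumE1.
  by rewrite [i]ord1 [j]ord1.
- by rewrite [LHS]thinmx0 [RHS]thinmx0.
Qed.

Lemma msum_eq (a b : bool) (A B : 'M[F]_(a, b)) : msum A = msum B -> A = B.
Proof. by move=> e; rewrite (mx01 A) (mx01 B) e. Qed.

Lemma msum_const (a b : bool) (x : F) :
  msum (const_mx x : 'M[F]_(a, b)) = if a && b then x else 0.
Proof.
case: a; case: b => /=; rewrite ?msumE00 ?msumE0 ?msumE1 ?mxE //.
Qed.

Lemma msumD (a b : nat) (A B : 'M[F]_(a, b)) : msum (A + B) = msum A + msum B.
Proof. by rewrite /msum -big_split; apply: eq_bigr => i _; rewrite -big_split; apply: eq_bigr => j _; rewrite mxE. Qed.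
Lemma msumN (a b : nat) (A : 'M[F]_(a, b)) : msum (- A) = - msum A.
Proof. by rewrite /msum -sumrN; apply: eq_bigr => i _; rewrite -sumrN; apply: eq_bigr => j _; rewrite mxE. Qed.
Lemma msum0 (a b : nat) : msum (0 : 'M[F]_(a, b)) = 0.
Proof. by rewrite /msum big1 // => i _; rewrite big1 // => j _; rewrite mxE. Qed.
Lemma msum_mul (a b c : bool) (A : 'M[F]_(a, b)) (B : 'M[F]_(b, c)) :
  msum (A *m B) = if b then msum A * msum B else 0.
Proof.
case: b A B => A B.
- case: a A => A; case: c B => B; rewrite /= ?msumE00 ?msumE0 ?mul0r ?mulr0 //.
  by rewrite !msumE1 !mxE big_ord1.
- by rewrite /= [A]thinmx0 mul0mx msum0.
Qed.

Lemma msum_sum (a b : nat) I (r : seq I) (P : pred I) (A : I -> 'M[F]_(a, b)) :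
  msum (\sum_(i <- r | P i) A i) = \sum_(i <- r | P i) msum (A i).
Proof.
elim/big_rec2: _ => [|i y1 y2 _ <-]; first exact: msum0.
by rewrite msumD.
Qed.
Lemma msum1 (k : nat) : msum (1%:M : 'M[F]_k) = k%:R.
Proof.
rewrite /msum (eq_bigr (fun _ => 1)) ?sumr_const ?card_ord //.
move=> i _; rewrite (bigD1 i) //= big1 ?addr0 ?mxE ?eqxx //.
by move=> j /negPf ji; rewrite mxE eq_sym ji.
Qed.

End MxBool.

Section SpreadRep.
Local Open Scope ring_scope.
Variables (m0 n : nat) (m : 'I_n -> nat) (F : fieldType).
Notation P := (pt m0 m).
Notation kR := (spread_rep F).

Definition SH (X Y : {set P}) (c : P -> F) : Prop := forall x y, ple x y ->
  [/\ x \in X -> x \in Y -> y \in X -> y \in Y -> c x = c y,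
      x \in X -> x \in Y -> y \in Y -> y \notin X -> c x = 0 &
      x \in X -> x \notin Y -> y \in X -> y \in Y -> c y = 0].

Definition sc (X Y : {set P}) (f : rhom (kR X) (kR Y)) (x : P) : F := msum (f x).

Definition mkhom (X Y : {set P}) (c : P -> F) : rhom (kR X) (kR Y) :=
  fun x => const_mx (c x).

Lemma rmap_kR (X : {set P}) x y :
  msum (rmap (kR X) x y) = if (x \in X) && (y \in X) then 1 else 0.
Proof.
rewrite /=; case: ifP => h; last exact: msum0.
by rewrite msum_const h.
Qed.

Lemma sc_out (X Y : {set P}) (f : rhom (kR X) (kR Y)) x :
  ~~ ((x \in X) && (x \in Y)) -> sc f x = 0.
Proof. exact: msum0d. Qed.

Lemma hom_SH (X Y : {set P}) (f : rhom (kR X) (kR Y)) : is_hom f -> SH X Y (sc f).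
Proof.
move=> hf x y xy; have := congr1 (@msum F _ _) (hf x y xy).
rewrite !msum_mul !rmap_kR.
have hx := @sc_out X Y f x; have hy := @sc_out X Y f y.
rewrite -/(sc f x) -/(sc f y).
move: (sc f x) (sc f y) hx hy => cx cy.
case xX: (x \in X); case xY: (x \in Y); case yX: (y \in X); case yY: (y \in Y);
  rewrite /= ?mul1r ?mulr1 ?mul0r ?mulr0 => hx hy E; split => //; 
  by rewrite ?hx ?hy.
Qed.

Lemma sc_mkhom (X Y : {set P}) (c : P -> F) x :
  sc (mkhom X Y c) x = if (x \in X) && (x \in Y) then c x else 0.
Proof. by rewrite /sc /mkhom msum_const. Qed.

Lemma SH_hom (X Y : {set P}) (c : P -> F) : SH X Y c -> is_hom (mkhom X Y c).
Proof.
move=> hc x y xy; apply: msum_eq; rewrite !msum_mul !rmap_kR.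
rewrite -/(sc (mkhom X Y c) x) -/(sc (mkhom X Y c) y) !sc_mkhom.
have [h1 h2 h3] := hc x y xy.
case xX: (x \in X); case xY: (x \in Y); case yX: (y \in X); case yY: (y \in Y);
  rewrite /= ?mul1r ?mulr1 ?mul0r ?mulr0 //.
- by rewrite h1.
- by rewrite h2 // yX.
- by rewrite h3 // xY.
Qed.

End SpreadRep.

Section Blk.
Local Open Scope ring_scope.
Variable F : fieldType.

Lemma mxblock_id (p : nat) (p_ : 'I_p -> nat) (hp : forall i, (p_ i <= 1)%N) :
  mxblock (p_ := p_) (q_ := p_) (fun i l => if i == l then const_mx 1 else 0 : 'M[F]_(p_ i, p_ l))
  = 1%:M.
Proof.
apply/matrixP => s t; rewrite !mxE.
case: eqP => e; rewrite mxE.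
- suff -> : s == t by [].
  apply/eqP/val_inj => /=.
  have z : forall s0 : 'I_(\sum_i p_ i), nat_of_ord (order.tagnat.sig2 s0) = 0%N.
    move=> s0; have := ltn_ord (order.tagnat.sig2 s0); have := hp (order.tagnat.sig1 s0).
    case: (p_ _) (order.tagnat.sig2 s0) => [|[|]] // [[|]] //.
  by rewrite (order.tagnat.rect s) (order.tagnat.rect t) !z e.
- by case: eqP => // st; exfalso; apply: e; rewrite st.
Qed.

Lemma const1_mul (a b c : bool) :
  (const_mx 1 : 'M[F]_(a, b)) *m (const_mx 1 : 'M[F]_(b, c)) =
  if b then const_mx 1 else 0.
Proof.
apply: msum_eq; rewrite msum_mul !msum_const.
case: b => /=; last by rewrite msum0.
rewrite msum_const.
by case: a; case: c; rewrite ?mulr1 ?mul0r ?mulr0.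
Qed.

End Blk.

Section DSum.
Local Open Scope ring_scope.
Variables (m0 n : nat) (m : 'I_n -> nat) (F : fieldType).
Notation P := (pt m0 m).
Notation kR := (spread_rep F).
Variable s : seq {set P}.
Notation D := (dsum F s).

Lemma ddim_le1 x i : (@ddim _ _ _ s x i <= 1)%N.
Proof. by rewrite /ddim; case: (_ \in _). Qed.

Lemma ifc1 (b a c : bool) :
  (if b then (const_mx 1 : 'M[F]_(a, c)) else 0) = if b && a && c then const_mx 1 else 0.
Proof.
case: b => //=; apply: msum_eq; case: ifP => h; rewrite msum_const ?msum0 h //.
Qed.

Lemma incl_proj (j k : 'I_(size s)) x :
  incl F j x *m proj F k x = if j == k then const_mx 1 else 0.
Proof.
rewrite /incl /proj mul_mxrow_mxcol (bigD1 j) //= big1 ?addr0; last first.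
  by move=> i ij; rewrite eq_sym (negPf ij) mul0mx.
rewrite eqxx; case: eqP => [<-|_]; last by rewrite mulmx0.
apply: msum_eq; rewrite msum_mul !msum_const.
by case: (x \in _); rewrite ?mulr1.
Qed.

Lemma sum_proj_incl x : \sum_(k < size s) proj F k x *m incl F k x = 1%:M.
Proof.
rewrite /proj /incl; under eq_bigr do rewrite mul_mxcol_mxrow.
rewrite -mxblock_sum -[RHS](mxblock_id F (ddim_le1 x)).
apply: eq_mxblock => i l.
rewrite (bigD1 i) //= big1 ?addr0; last first.
  by move=> k ki; rewrite eq_sym (negPf ki) mul0mx.
rewrite eqxx; case: eqP => [<-|_]; last by rewrite mulmx0.
apply: msum_eq; rewrite msum_mul !msum_const.
by case: (x \in _); rewrite ?mulr1.
Qed.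

Lemma msum_if (a b : nat) (c : bool) (A B : 'M[F]_(a, b)) :
  msum (if c then A else B) = if c then msum A else msum B.
Proof. by case: c. Qed.

Lemma incl_hom (j : 'I_(size s)) : is_hom (incl F j).
Proof.
move=> x y xy; rewrite /incl mul_mxrow /= mul_mxrow_mxblock.
apply: eq_mxrow => l.
rewrite (bigD1 j) //= big1 ?addr0; last first.
  by move=> k kj; rewrite eq_sym (negPf kj) mul0mx.
apply: msum_eq; rewrite !msum_mul !msum_if !msum_const ?msum0 eqxx.
rewrite !if_same; case: eqP => [<-|_]; rewrite /= ?andbF ?andFb ?mulr0 ?mul0r ?if_same //.
by case: (x \in _); case: (y \in _); rewrite /= ?mulr1 ?mul1r ?mulr0 ?mul0r.
Qed.

Lemma proj_hom (j : 'I_(size s)) : is_hom (proj F j).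
Proof.
move=> x y xy; rewrite /proj mxcol_mul /= mul_mxblock_mxrow.
apply: eq_mxcol => l.
rewrite (bigD1 j) //= big1 ?addr0; last first.
  by move=> k kj; rewrite (negPf kj) mulmx0.
apply: msum_eq; rewrite !msum_mul !msum_if !msum_const ?msum0 eqxx.
rewrite !if_same; case: eqP => [->|_]; rewrite /= ?andbF ?andFb ?mulr0 ?mul0r ?if_same //.
by case: (x \in _); case: (y \in _); rewrite /= ?mulr1 ?mul1r ?mulr0 ?mul0r.
Qed.

End DSum.

Section Homs.
Local Open Scope ring_scope.
Variables (m0 n : nat) (m : 'I_n -> nat) (F : fieldType).
Notation P := (pt m0 m).
Notation kR := (spread_rep F).
Notation rep := (rep m0 m F).

Definition hadd (V W : rep) (f g : rhom V W) : rhom V W := fun x => f x + g x.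
Definition hopp (V W : rep) (f : rhom V W) : rhom V W := fun x => - f x.
Definition hsum (V W : rep) (I : Type) (r : seq I) (Fm : I -> rhom V W) : rhom V W :=
  fun x => \sum_(i <- r) Fm i x.

Lemma hom_comp (U V W : rep) (f : rhom U V) (g : rhom V W) :
  is_hom f -> is_hom g -> is_hom (comp f g).
Proof.
move=> hf hg x y xy; rewrite /comp mulmxA hf // -!mulmxA hg //.
Qed.

Lemma hom_add (V W : rep) (f g : rhom V W) : is_hom f -> is_hom g -> is_hom (hadd f g).
Proof. by move=> hf hg x y xy; rewrite /hadd mulmxDr mulmxDl hf // hg. Qed.

Lemma hom_opp (V W : rep) (f : rhom V W) : is_hom f -> is_hom (hopp f).
Proof. by move=> hf x y xy; rewrite /hopp mulmxN mulNmx hf. Qed.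

Lemma hom_id (V : rep) : is_hom (hid V).
Proof. by move=> x y xy; rewrite /hid mulmx1 mul1mx. Qed.

Lemma hom_sum (V W : rep) (I : Type) (r : seq I) (Fm : I -> rhom V W) :
  (forall i, is_hom (Fm i)) -> is_hom (hsum r Fm).
Proof.
move=> hF x y xy; rewrite /hsum mulmx_sumr mulmx_suml.
by apply: eq_bigr => i _; rewrite hF.
Qed.

Lemma conn_closed (X Y : {set P}) x0 : zigzag_connected Y -> x0 \in X -> {subset X <= Y} ->
  (forall a b, a \in X -> b \in Y -> comparable a b -> b \in X) -> {subset Y <= X}.
Proof.
move=> zY x0X XY cl y yY.
have [p [pp lp ap]] := zY x0 y (XY _ x0X) yY.
elim: p x0 x0X pp lp ap => [|z p IH] x0 x0X /=; first by move=> _ <-.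
case/andP=> cz pp lp /andP[zY' ap].
by apply: (IH z) => //; apply: (cl x0).
Qed.

Lemma iso_sub (X Y : {set P}) (f : rhom (kR X) (kR Y)) : is_iso f -> {subset X <= Y}.
Proof.
case=> _ [g [_ e _]] x xX; have := congr1 (@msum F _ _) (e x).
rewrite /comp /hid msum_mul msum1 /=; move: (msum (f x)) (msum (g x)) => a b; rewrite xX.
by case: (x \in Y) => //= /esym/eqP; rewrite oner_eq0.
Qed.

Lemma iso_eq (X Y : {set P}) (f : rhom (kR X) (kR Y)) : is_iso f -> X = Y.
Proof.
move=> hf; apply/setP => x; apply/idP/idP; first by move=> h; apply: (iso_sub hf).
case: hf => _ [g [hg _ e]] xY; have := congr1 (@msum F _ _) (e x).
rewrite /comp /hid msum_mul msum1 /=; move: (msum (f x)) (msum (g x)) => a b; rewrite xY.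
by case: (x \in X) => //= /esym/eqP; rewrite oner_eq0.
Qed.

Lemma zero_comp (X Y : {set P}) (a : rhom (kR X) (kR Y)) (b : rhom (kR Y) (kR X)) :
  spread X -> spread Y -> X != Y -> is_hom a -> is_hom b ->
  forall x, a x *m b x = 0.
Proof.
move=> sX sY XY ha hb.
have he := hom_SH (hom_comp ha hb).
have hA := hom_SH ha; have hB := hom_SH hb.
suff nz : forall x1, x1 \in X -> sc (comp a b) x1 != 0 -> False.
  move=> x; apply: msum_eq; rewrite msum0.
  have : (x \in X) || (x \notin X) by case: (x \in X).
  case/orP => xX; last by apply: msum0d; rewrite (negPf xX).
  by apply/eqP; apply/negPn/negP => h; apply: (nz x).
move=> x1 x1X nz1.
pose Z := [set x in X | sc (comp a b) x == sc (comp a b) x1].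
have XZ : {subset X <= Z}.
  apply: (conn_closed (x0 := x1)) (proj2 (proj2 sX)) _ _ _ => //.
  - by rewrite inE x1X eqxx.
  - by move=> z; rewrite inE => /andP[].
  move=> u w; rewrite inE => /andP[uX /eqP eu] wX /orP[] uw; rewrite inE wX /=.
  + by have [h1 _ _] := he u w uw; rewrite -(h1 uX uX wX wX) eu.
  + by have [h1 _ _] := he w u uw; rewrite (h1 wX wX uX uX) eu.
have nzX : forall x, x \in X -> [/\ x \in Y, sc a x != 0 & sc b x != 0].
  move=> x xX; have := XZ x xX; rewrite inE xX /= => /eqP ex.
  move: nz1; rewrite -ex /sc /comp msum_mul -/(sc a x) -/(sc b x).
  move: (sc a x) (sc b x) => ca cb.
  case: (x \in Y) => //=; last by rewrite eqxx.
  by rewrite mulf_eq0 negb_or => /andP[].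
have XsY : {subset X <= Y} by move=> x /nzX [].
have YX : {subset Y <= X}.
  apply: (conn_closed (x0 := x1)) (proj2 (proj2 sY)) _ _ _ => //.
  move=> u w uX wY cuw; apply/negPn/negP => wX.
  have [uY nau nbu] := nzX u uX.
  case/orP: cuw => uw.
  + have [_ h2 _] := hA u w uw; by rewrite (h2 uX uY wY wX) eqxx in nau.
  + have [_ _ h3] := hB w u uw; by rewrite (h3 wY wX uY uX) eqxx in nbu.
by move/negP: XY; apply; apply/eqP/setP => x; apply/idP/idP; [apply: XsY | apply: YX].
Qed.

End Homs.

Section Main.
Local Open Scope ring_scope.
Variables (m0 n : nat) (m : 'I_n -> nat) (F : fieldType).
Notation P := (pt m0 m).
Notation kR := (spread_rep F).

Lemma const1_id (b : bool) : (const_mx 1 : 'M[F]_(b, b)) = 1%:M.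
Proof. by apply: msum_eq; rewrite msum_const msum1; case: b. Qed.

Lemma sum_if_const (T : nmodType) (p : nat) (i : 'I_p) (t : T) :
  \sum_(k < p) (if k == i then t else 0) = t.
Proof. by rewrite -big_mkcond big_pred1_eq. Qed.

Lemma msum_mul0 (a b c : bool) (A : 'M[F]_(a, b)) (B : 'M[F]_(b, c)) :
  ~~ b -> msum (A *m B) = 0.
Proof. by rewrite msum_mul; case: b A B. Qed.

Definition NF (R S : {set P}) (c : P -> F) : Prop :=
  forall (s' : seq {set P}) (u v : nat -> P -> F),
  (forall k, (k < size s')%N -> [/\ spread (nth set0 s' k), nth set0 s' k != R,
        nth set0 s' k != S, SH R (nth set0 s' k) (u k) & SH (nth set0 s' k) S (v k)]) ->
  (forall x, x \in R -> x \in S ->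
     c x = \sum_(k < size s' | x \in nth set0 s' k) u k x * v k x) -> False.

Variables (s : seq {set P}) (S : {set P}) (rho : rhom (dsum F s) (dsum F [:: S])).
Notation i0 := (ord0 : 'I_(size [:: S])).

Definition fj (j : 'I_(size s)) : rhom (kR (nth set0 s j)) (kR S) :=
  comp (incl F j) (comp rho (proj F i0 : rhom (dsum F [:: S]) (kR S))).

Lemma fj_hom j : is_hom rho -> is_hom (fj j).
Proof.
by move=> hr; apply: hom_comp; [apply: incl_hom | apply: hom_comp => //; exact: (@proj_hom _ _ _ F [:: S] i0)].
Qed.

Lemma rep_NF : min_spread_rad_approx rho -> forall j : 'I_(size s),
  NF (nth set0 s j) S (sc (fj j)).
Proof.
move=> [sp hrho rmin appr] j s' u v hk hf.
set R := nth set0 s j.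
have sR : spread R := sp _ (mem_nth set0 (ltn_ord j)).
pose U : rhom (kR R) (dsum F s') := hsum (index_enum 'I_(size s'))
  (fun k => comp (mkhom R (nth set0 s' k) (u k)) (incl F k)).
pose G : rhom (dsum F s') (dsum F [:: S]) := hsum (index_enum 'I_(size s'))
  (fun k => comp (proj F k) (comp (mkhom (nth set0 s' k) S (v k))
     (incl F i0 : rhom (kR S) (dsum F [:: S])))).
have hU : is_hom U.
  apply: hom_sum => k; apply: hom_comp; last exact: incl_hom.
  by apply: SH_hom; case: (hk k (ltn_ord k)).
have hG : is_hom G.
  apply: hom_sum => k; apply: hom_comp; first exact: proj_hom.
  apply: hom_comp; last exact: (@incl_hom _ _ _ F [:: S] i0).
  by apply: SH_hom; case: (hk k (ltn_ord k)).
have radG : in_rad G.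
  move=> i j0 /iso_eq e; rewrite (ord1 j0) /= in e.
  by case: (hk i (ltn_ord i)) => _ _ /eqP.
have sps' : forall R', R' \in s' -> spread R'.
  by move=> R' /(nthP set0) [k kl <-]; case: (hk k kl).
have [h [hh eG]] := (appr s' sps' G hG).1 radG.
pose H := comp U h.
have claimA : forall x, incl F j x *m rho x = H x *m rho x.
  move=> x.
  have e1 : proj F i0 x *m incl F i0 x = 1%:M.
    have := sum_proj_incl F [:: S] x.
    by rewrite (big_ord1 _ (fun k : 'I_(size [:: S]) => proj F k x *m incl F k x)).
  rewrite -[in LHS](mulmx1 (rho x)) -e1 !mulmxA.
  rewrite /H /comp -(mulmxA (U x)) -[h x *m rho x]/(comp h rho x) -eG.
  rewrite /U /G /hsum mulmx_suml.
  have -> : \sum_(i < size s') (mkhom R (nth set0 s' i) (u i) x *m incl F i x) *m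
      \sum_(k < size s') (proj F k x *m (mkhom (nth set0 s' k) S (v k) x *m incl F i0 x))
    = \sum_(i < size s') (mkhom R (nth set0 s' i) (u i) x *m mkhom (nth set0 s' i) S (v i) x)
        *m incl F i0 x.
    apply: eq_bigr => i _; rewrite mulmx_sumr.
    have tk : forall k : 'I_(size s'),
      mkhom R (nth set0 s' i) (u i) x *m incl F i x *m
        (proj F k x *m (mkhom (nth set0 s' k) S (v k) x *m incl F i0 x)) =
      if k == i then mkhom R (nth set0 s' i) (u i) x *m mkhom (nth set0 s' i) S (v i) x
                      *m incl F i0 x else 0.
      move=> k; case: (eqVneq k i) => [->|ki].
        by rewrite !mulmxA -(mulmxA _ (incl F i x)) incl_proj eqxx const1_id mulmx1.
      rewrite !mulmxA -(mulmxA _ (incl F i x)) incl_proj.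
      by rewrite eq_sym (negPf ki) mulmx0 !mul0mx.
    under eq_bigr => k _ do rewrite tk.
    exact: sum_if_const.
  rewrite -mulmx_suml; congr (_ *m _).
  apply: msum_eq; rewrite msum_sum.
  case/orP: (orbN (x \in R)) => xR; last first.
    rewrite msum0d; last by rewrite (negPf xR).
    by rewrite big1 // => k _; rewrite msum0d // (negPf xR).
  case/orP: (orbN (x \in S)) => xS; last first.
    rewrite msum0d; last by rewrite (negPf xS) andbF.
    by rewrite big1 // => k _; rewrite msum0d // (negPf xS) andbF.
  have -> : msum (incl F j x *m rho x *m proj F i0 x) = sc (fj j) x by rewrite /sc /fj /comp mulmxA.
  rewrite (hf x xR xS) [RHS](bigID (fun k : 'I_(size s') => x \in nth set0 s' k)) /=.
  rewrite [X in _ = _ + X]big1 ?addr0; last first.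
    by move=> k kx; rewrite msum_mul0.
  apply: eq_bigr => k kx; rewrite msum_mul.
  rewrite -/(sc (mkhom R (nth set0 s' k) (u k)) x) -/(sc (mkhom (nth set0 s' k) S (v k)) x).
  by rewrite !sc_mkhom xR xS kx.
have claimB : forall x, H x *m proj F j x = 0.
  move=> x; rewrite /H /comp -mulmxA /U /hsum mulmx_suml big1 // => k _.
  rewrite /comp -!mulmxA.
  have [sk kR' _ hu _] := hk k (ltn_ord k).
  have := @zero_comp m0 n m F R (nth set0 s' k) (mkhom R (nth set0 s' k) (u k))
    (comp (incl F k) (comp h (proj F j))) sR sk _ (SH_hom hu) _ x.
  rewrite /comp; apply => //; first by rewrite eq_sym.
  apply: hom_comp; first exact: incl_hom.
  by apply: hom_comp => //; exact: proj_hom.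
pose phi : rhom (dsum F s) (dsum F s) :=
  hadd (hadd (hid _) (hopp (comp (proj F j) (incl F j)))) (comp (proj F j) H).
have hH : is_hom H by apply: hom_comp.
have hphi : is_hom phi.
  apply: hom_add; last by apply: hom_comp => //; exact: proj_hom.
  apply: hom_add; first exact: hom_id.
  by apply: hom_opp; apply: hom_comp; [exact: proj_hom | exact: incl_hom].
have ephi : heq (comp phi rho) rho.
  move=> x; rewrite /comp /phi /hadd /hopp /hid /comp !mulmxDl mul1mx mulNmx.
  by rewrite -!mulmxA claimA /H /comp -mulmxA addrNK.
have [_ [g [_ eg _]]] := rmin phi hphi ephi.
have [x xR] : exists x, x \in R by case: sR => /set0Pn [x xR] _; exists x.
pose w := incl F j x - H x.
have ij1 : incl F j x *m proj F j x = 1%:M by rewrite incl_proj eqxx const1_id.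
have w0 : w *m phi x = 0.
  rewrite /w /phi /hadd /hopp /hid /comp mulmxBl !mulmxDr mulmx1 !mulmxN !mulmxA.
  rewrite ij1 claimB !mul1mx !mul0mx subr0 addrN add0r.
  by rewrite mulmx1 addr0 /H /comp subrr.
have wz : w = 0.
  have e2 : phi x *m g x = 1%:M := eg x.
  by rewrite -[w]mulmx1 -e2 mulmxA w0 mul0mx.
have := congr1 (fun M => msum (M *m proj F j x)) wz.
rewrite /w mulmxBl ij1 claimB subr0 mul0mx msum0 msum1.
have -> : rdim (kR (nth set0 s j)) x = 1%N by rewrite /= -/R xR.
by move/eqP; rewrite oner_eq0.
Qed.

Lemma rep_RS : min_spread_rad_approx rho -> forall j : 'I_(size s),
  nth set0 s j = S -> exists2 x, x \in S & sc (fj j) x = 0.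
Proof.
move=> [sp hrho rmin appr] j eRS.
have radr : in_rad rho.
  apply: (appr s sp rho hrho).2; exists (hid _); split; first exact: hom_id.
  by move=> x; rewrite /comp mul1mx.
have niso := radr j i0.
case: (boolP [exists x in S, sc (fj j) x == 0]) => [/existsP [x /andP[xS /eqP]] | hall].
  by exists x.
exfalso; apply: niso.
have hc : forall x, x \in S -> sc (fj j) x != 0.
  by move=> x xS; apply: contra hall => e; apply/existsP; exists x; rewrite xS.
have shf := hom_SH (fj_hom j hrho).
pose g : rhom (kR S) (kR (nth set0 s j)) :=
  mkhom S (nth set0 s j) (fun x => (sc (fj j) x)^-1).
have hg : is_hom g.
  apply: SH_hom => x y xy; have [h1 h2 h3] := shf x y xy; split.
  - by move=> xS _ yS _; rewrite (h1 _ xS _ yS) // eRS.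
  - by move=> _ _ yR /negP []; rewrite -eRS.
  - by move=> xS /negP []; rewrite eRS.
split; first exact: fj_hom.
exists g; split => // x; apply: msum_eq; rewrite msum_mul msum1.
- rewrite -/(sc (fj j) x) -/(sc g x) /g sc_mkhom.
  have := hc x; move: (sc (fj j) x) => c.
  rewrite /= eRS; case: (x \in S) => //= /(_ isT) c0.
  by rewrite mulfV.
- rewrite -/(sc (fj j) x) -/(sc g x) /g sc_mkhom.
  have := hc x; move: (sc (fj j) x) => c.
  rewrite /= eRS; case: (x \in S) => //= /(_ isT) c0.
  by rewrite mulVf.
Qed.

Lemma summand_index (R : {set P}) : spread R -> (forall R', R' \in s -> spread R') ->
  direct_summand (kR R) (dsum F s) -> exists j : 'I_(size s), nth set0 s j = R.
Proof.
move=> sR sp [i [p [hi hp e]]].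
have [x xR] : exists x, x \in R by case: sR => /set0Pn [x xR] _; exists x.
have : i x *m p x = 1%:M := e x.
rewrite -[i x]mulmx1 -(sum_proj_incl F s x) mulmx_sumr mulmx_suml.
move=> e1.
have : exists2 k : 'I_(size s), true & i x *m proj F k x *m (incl F k x *m p x) != 0.
  apply/exists_inP; apply: contraT; rewrite negb_exists_in => /forall_inP h0.
  move: e1; rewrite big1; last by move=> k _; have := h0 k isT; move/negPn/eqP => <-; rewrite !mulmxA.
  move/(congr1 (@msum F _ _)); rewrite msum0 msum1 /= xR /=.
  by move/esym/eqP; rewrite oner_eq0.
case=> k _ nz; exists k; apply/eqP; apply: contraLR nz => ne.
have sk : spread (nth set0 s k) := sp _ (mem_nth set0 (ltn_ord k)).
have hz : comp i (proj F k) x *m comp (incl F k) p x = 0.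
  apply: (zero_comp sR sk) => //; first by rewrite eq_sym.
  - by apply: hom_comp => //; exact: proj_hom.
  - by apply: hom_comp => //; exact: incl_hom.
by move: hz; rewrite /comp !mulmxA => ->; rewrite eqxx.
Qed.

End Main.

Section Order.
Variables (m0 n : nat) (m : 'I_n -> nat).
Notation P := (pt m0 m).

Lemma pleP (x y : P) : reflect ((x.1 <= y.1)%N /\ forall i, (x.2 i <= y.2 i)%N) (ple x y).
Proof.
rewrite /ple; apply: (iffP andP) => [[h /forallP h2]|[h h2]]; split => //.
by apply/forallP.
Qed.

Lemma ple_refl (x : P) : ple x x.
Proof. by apply/pleP; split. Qed.

Lemma ple_trans (x y z : P) : ple x y -> ple y z -> ple x z.
Proof.
move=> /pleP [h1 h2] /pleP [h3 h4]; apply/pleP; split; first exact: leq_trans h3.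
by move=> i; apply: leq_trans (h2 i) (h4 i).
Qed.

Lemma ple_anti (x y : P) : ple x y -> ple y x -> x = y.
Proof.
case: x y => [t g] [t' g'] /pleP [/= h1 h2] /pleP [/= h3 h4].
congr pair; first by apply/val_inj/eqP; rewrite eqn_leq h1 h3.
by apply/ffunP => i; apply/val_inj/eqP; rewrite eqn_leq h2 h4.
Qed.

Definition dcnt (x : P) := #|[set y : P | ple y x]|.
Definition ucnt (x : P) := #|[set y : P | ple x y]|.

Lemma dcnt_lt (x y : P) : ple y x -> y != x -> (dcnt y < dcnt x)%N.
Proof.
move=> yx ne; apply: proper_card; apply/properP; split.
  by apply/subsetP => z; rewrite !inE => zy; apply: ple_trans zy yx.
exists x; rewrite !inE ?ple_refl //; apply/negP => xy.
by move/eqP: ne; apply; apply: ple_anti.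
Qed.

Lemma ucnt_lt (x y : P) : ple x y -> y != x -> (ucnt y < ucnt x)%N.
Proof.
move=> xy ne; apply: proper_card; apply/properP; split.
  by apply/subsetP => z; rewrite !inE => zy; apply: ple_trans xy zy.
exists x; rewrite !inE ?ple_refl //; apply/negP => yx.
by move/eqP: ne; apply; apply: ple_anti.
Qed.

Lemma pminP (X : {set P}) x :
  reflect (x \in X /\ forall y, y \in X -> ple y x -> y = x) (x \in pmin X).
Proof.
rewrite inE; apply: (iffP andP) => [[xX /forall_inP h]|[xX h]]; split => //.
  by move=> y yX yx; apply/eqP; move: (h y yX) => /implyP; apply.
by apply/forall_inP => y yX; apply/implyP => yx; rewrite (h y yX yx).
Qed.

Lemma pmaxP (X : {set P}) x :
  reflect (x \in X /\ forall y, y \in X -> ple x y -> y = x) (x \in pmax X).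
Proof.
rewrite inE; apply: (iffP andP) => [[xX /forall_inP h]|[xX h]]; split => //.
  by move=> y yX yx; apply/eqP; move: (h y yX) => /implyP; apply.
by apply/forall_inP => y yX; apply/implyP => yx; rewrite (h y yX yx).
Qed.

Lemma exists_min (X : {set P}) x : x \in X -> exists2 a, a \in pmin X & ple a x.
Proof.
move: {2}(dcnt x) (leqnn (dcnt x)) => k; elim: k x => [|k IH] x.
  by rewrite leqn0 => /eqP/cards0_eq/setP/(_ x); rewrite !inE ple_refl.
move=> hk xX.
case: (boolP (x \in pmin X)) => [xm|]; first by exists x => //; apply: ple_refl.
rewrite inE xX /= negb_forall_in => /exists_inP [y yX].
rewrite negb_imply => /andP [yx ne].
have [a am ay] := IH y (leq_trans (dcnt_lt yx ne) hk) yX.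
by exists a => //; apply: ple_trans ay yx.
Qed.

Lemma exists_max (X : {set P}) x : x \in X -> exists2 a, a \in pmax X & ple x a.
Proof.
move: {2}(ucnt x) (leqnn (ucnt x)) => k; elim: k x => [|k IH] x.
  by rewrite leqn0 => /eqP/cards0_eq/setP/(_ x); rewrite !inE ple_refl.
move=> hk xX.
case: (boolP (x \in pmax X)) => [xm|]; first by exists x => //; apply: ple_refl.
rewrite inE xX /= negb_forall_in => /exists_inP [y yX].
rewrite negb_imply => /andP [xy ne].
have [a am ay] := IH y (leq_trans (ucnt_lt xy ne) hk) yX.
by exists a => //; apply: ple_trans xy ay.
Qed.

Lemma comparableC (a b : P) : comparable a b = comparable b a.
Proof. by rewrite /comparable orbC. Qed.

Definition eX (X : {set P}) : rel P := fun a b => [&& a \in X, b \in X & comparable a b].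

Lemma eX_sym X : symmetric (eX X).
Proof. by move=> a b; rewrite /eX comparableC andbCA andbA. Qed.

Lemma zzP (X : {set P}) :
  zigzag_connected X <-> forall x y, x \in X -> y \in X -> connect (eX X) x y.
Proof.
split.
  move=> zz x y xX yX; have [p [pp lp ap]] := zz x y xX yX.
  apply/connectP; exists p => //.
  elim: p x xX pp ap {lp} => //= z p IH x xX /andP [cz pp] /andP [zX ap].
  by rewrite /eX xX zX cz /= IH.
move=> h x y xX yX; have /connectP [p pp lp] := h x y xX yX.
exists p; split => //.
- elim: p x pp {lp xX} => //= z p IH x /andP [/and3P [_ _ cz] pp].
  by rewrite cz (IH z).
- elim: p x pp {lp xX} => //= z p IH x /andP [/and3P [_ zX _] pp].
  by rewrite zX (IH z).
Qed.

Lemma connect_mono (X Y : {set P}) x y : {subset X <= Y} ->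
  connect (eX X) x y -> connect (eX Y) x y.
Proof.
move=> XY; apply: connect_sub => a b /and3P [aX bX ab]; apply: connect1.
by rewrite /eX !XY.
Qed.

Lemma connect_edge (X : {set P}) a b : a \in X -> b \in X -> comparable a b ->
  connect (eX X) a b.
Proof. by move=> aX bX ab; apply: connect1; rewrite /eX aX bX. Qed.

Lemma zz_hub (X : {set P}) h : h \in X -> (forall y, y \in X -> connect (eX X) h y) ->
  zigzag_connected X.
Proof.
move=> hX hy; apply/zzP => x y xX yX.
apply: connect_trans (hy y yX).
by rewrite (sym_connect_sym (@eX_sym X)); apply: hy.
Qed.

Definition dec0 (x : P) : P :=
  (Ordinal (leq_ltn_trans (leq_subr 1 x.1) (ltn_ord x.1)), x.2).

Lemma dec0_ple (x : P) : ple (dec0 x) x.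
Proof. by apply/pleP; split => //=; apply: leq_subr. Qed.

Lemma dec0_ne (x : P) : (0 < x.1)%N -> dec0 x != x.
Proof.
move=> h; apply/negP => /eqP /(congr1 (fun z : P => val z.1)) /=.
by case: (nat_of_ord x.1) h => // k _; rewrite subSS subn0 => e; move: (ltnSn k); rewrite -{2}e ltnn.
Qed.

Lemma ple_dec0 (y x : P) : ple y x -> (y.1 < x.1)%N -> ple y (dec0 x).
Proof.
move=> /pleP [h1 h2] h3; apply/pleP; split => //=.
by rewrite -ltnS; case: (nat_of_ord x.1) h3 => // k; rewrite subSS subn0.
Qed.

Lemma dec0_ple_up (x b : P) : ple (dec0 x) b -> (x.1 <= b.1)%N -> ple x b.
Proof. by move=> /pleP [_ h2] h; apply/pleP; split. Qed.

Lemma dec0_1 (x : P) : (0 < x.1)%N -> (dec0 x).1.+1 = x.1 :> nat.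
Proof. by move=> h; rewrite /= subn1 prednK. Qed.

Lemma succT_val (t : 'I_m0) : (t.+1 < m0)%N -> val (succT t) = t.+1.
Proof. by move=> h; rewrite /succT val_insubd h. Qed.

End Order.

Section Comb1.
Variables (m0 n : nat) (m : 'I_n -> nat).
Notation P := (pt m0 m).

Definition XS (S : {set P}) : {set P} :=
  pmin setT :|: pmin S :|: (@shift0 m0 n m) @: pmin S :|: (@shift0 m0 n m) @: pmax S :|: (@shift0 m0 n m) @: ((@shift0 m0 n m) @: pmax S).

Lemma QsetE (S : {set P}) : Qset S = [set x : P | x.1 \in (@pi0 m0 n m) @: XS S].
Proof. by []. Qed.

Lemma inQ (S : {set P}) (x z : P) : z \in XS S -> val z.1 = val x.1 -> x \in Qset S.
Proof.
by move=> zX e; rewrite QsetE inE; apply/imsetP; exists z => //; apply/val_inj.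
Qed.

Lemma Q_bot (S : {set P}) (x : P) : val x.1 = 0 -> x \in Qset S.
Proof.
move=> x0; have [a am ax] := exists_min (in_setT x).
apply: (inQ (z := a)); first by rewrite /XS !in_setU am.
by move/pleP: ax => [h _]; rewrite x0; apply/eqP; rewrite -leqn0 -x0.
Qed.

Lemma Q_A (S : {set P}) (a x : P) : a \in pmin S -> val a.1 = val x.1 -> x \in Qset S.
Proof. by move=> am; apply: inQ; rewrite /XS !in_setU am !orbT. Qed.

Lemma Q_A1 (S : {set P}) (a x : P) : a \in pmin S -> (val a.1).+1 = val x.1 -> x \in Qset S.
Proof.
move=> am e; apply: (inQ (z := shift0 a)); first by rewrite /XS !in_setU (imset_f _ am) ?orbT.
rewrite /shift0 /=; move: e => /= e; rewrite succT_val e //; exact: ltn_ord.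
Qed.

Lemma Q_B1 (S : {set P}) (b x : P) : b \in pmax S -> (val b.1).+1 = val x.1 -> x \in Qset S.
Proof.
move=> am e; apply: (inQ (z := shift0 b)); first by rewrite /XS !in_setU (imset_f _ am) ?orbT.
rewrite /shift0 /=; move: e => /= e; rewrite succT_val e //; exact: ltn_ord.
Qed.

Lemma Q_B2 (S : {set P}) (b x : P) : b \in pmax S -> (val b.1).+2 = val x.1 -> x \in Qset S.
Proof.
move=> am e; apply: (inQ (z := shift0 (shift0 b))); first by rewrite /XS !in_setU (imset_f _ (imset_f _ am)) ?orbT.
have h1 : ((val b.1).+1 < m0)%N by rewrite (leq_ltn_trans _ (ltn_ord x.1)) // -e.
rewrite /shift0 /=; move: e h1 => /= e h1; rewrite !succT_val //= e //; exact: ltn_ord.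
Qed.

Lemma upsetP (X : {set P}) (y : P) : reflect (exists2 x, x \in X & ple x y) (y \in upset X).
Proof. by rewrite inE; apply: exists_inP. Qed.

Lemma cover_cases (X : {set P}) (c : P) : c \in pcover X ->
  [/\ c \notin X, exists2 x, x \in X & ple x c &
    (exists2 a, a \in pmin X & val a.1 = val c.1) \/ ((0 < c.1)%N /\ dec0 c \in X)].
Proof.
move/pminP => [] /setDP [cu cX] cmin; split => //; first exact/upsetP.
have [x xX xc] := upsetP _ _ cu.
have [a am ax] := exists_min xX.
have ac := ple_trans ax xc.
case: (ltngtP a.1 c.1) => h; last by left; exists a.
- right; split; first by apply: leq_ltn_trans h.
  apply/negPn/negP => dX.
  have: dec0 c = c.
    apply: cmin; last exact: dec0_ple.
    apply/setDP; split => //; apply/upsetP; exists a; first by case/pminP: am.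
    exact: ple_dec0.
  by apply/eqP; apply: dec0_ne; apply: leq_ltn_trans h.
- by move/pleP: ac => [h' _]; rewrite leqNgt h in h'.
Qed.

Lemma above_max (X : {set P}) (c : P) : convex X -> (0 < c.1)%N -> dec0 c \in X -> c \notin X ->
  (exists2 a, a \in X & ple a c) -> exists2 b, b \in pmax X & (val b.1).+1 = val c.1.
Proof.
move=> cvX c0 dX cX [a aX ac].
have [b bm db] := exists_max dX; exists b => //.
have bX : b \in X by case/pmaxP: bm.
case: (leqP c.1 b.1) => h.
  by case/negP: cX; apply: (cvX a c b) => //; apply: dec0_ple_up.
move/pleP: db => [h1 _] /=; apply/eqP; rewrite eqn_leq h /=.
by rewrite -(dec0_1 c0) ltnS.
Qed.

Lemma S_min (S : {set P}) : pmin S \subset Qset S.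
Proof. by apply/subsetP => x xm; apply: (Q_A xm). Qed.

Lemma S_cover (S : {set P}) (c : P) : convex S -> c \in pcover S ->
  (exists2 a, a \in pmin S & val a.1 = val c.1) \/
  (exists2 b, b \in pmax S & (val b.1).+1 = val c.1).
Proof.
move=> cvS cc; have [cS ex [h|[c0 dS]]] := cover_cases cc; first by left.
by right; apply: above_max.
Qed.

Lemma S_coverQ (S : {set P}) : convex S -> pcover S \subset Qset S.
Proof.
move=> cvS; apply/subsetP => c cc.
case: (S_cover cvS cc) => [[a am e]|[b bm e]]; [exact: Q_A am e | exact: Q_B1 bm e].
Qed.

End Comb1.

Section Comb2.
Local Open Scope ring_scope.
Variables (m0 n : nat) (m : 'I_n -> nat) (F : fieldType).
Notation P := (pt m0 m).

Definition upc (X Y : {set P}) := forall x y, ple x y -> x \in X -> x \in Y -> y \in Y -> y \in X.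
Definition dnc (X Y : {set P}) := forall x y, ple x y -> y \in X -> y \in Y -> x \in X -> x \in Y.

Lemma SH_const (X Y : {set P}) (a : F) : upc X Y -> dnc X Y -> SH X Y (fun _ => a).
Proof.
move=> hu hd x y xy; split => //.
- by move=> xX xY yY /negP []; apply: (hu x y).
- by move=> xX /negP nY yX yY; case: nY; apply: (hd x y).
Qed.

Lemma NF1 (R S R' : {set P}) (c : P -> F) (lam : F) : NF R S c ->
  spread R' -> R' != R -> R' != S -> upc R R' -> dnc R R' -> upc R' S -> dnc R' S ->
  (forall x, x \in R -> x \in S -> x \in R' /\ c x = lam) -> False.
Proof.
move=> hNF sR' n1 n2 u1 d1 u2 d2 hc.
apply: (hNF [:: R'] (fun _ _ => 1) (fun _ _ => lam)).
  by case=> // _; split => //; apply: SH_const.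
move=> x xR xS; have [xR' ->] := hc x xR xS.
by rewrite big_mkcond big_ord1 /= xR' mul1r.
Qed.

Lemma Q_same (S : {set P}) (a x : P) : a \in Qset S -> val a.1 = val x.1 -> x \in Qset S.
Proof.
by rewrite !QsetE !inE => h e; have -> : x.1 = a.1 by apply/val_inj.
Qed.

Lemma connect_pred (e : rel P) (Q : pred P) a b :
  (forall x y, Q x -> e x y -> Q y) -> connect e a b -> Q a -> Q b.
Proof.
move=> hQ /connectP [p pp ->]; elim: p a pp => //= z p IH a /andP [az pp] Qa.
by apply: (IH z pp); apply: hQ az.
Qed.


Lemma caseA (S R : {set P}) (c : P -> F) (lam : F) : spread S -> spread R ->
  {subset R <= S} -> R != S -> (forall x y, x \in R -> y \in S -> ple x y -> y \in R) ->
  (forall z, z \in R -> c z = lam) -> NF R S c ->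
  pmin R \subset Qset S /\ pcover R \subset Qset S.
Proof.
move=> sS sR RS nRS up cR hNF.
have [_ [cvS zS]] := sS; have [_ [cvR zR]] := sR.
have minQ : pmin R \subset Qset S.
  apply/subsetP => r /pminP [rR rmin].
  have [a am ar] := exists_min (RS _ rR).
  have aS : a \in S by case/pminP: am.
  case: (ltngtP a.1 r.1) => h; last first.
  - by apply: (Q_A am).
  - by move/pleP: ar => [h' _]; rewrite leqNgt h in h'.
  have r0 : (0 < r.1)%N by apply: leq_ltn_trans h.
  set q := dec0 r.
  have aq : ple a q by apply: ple_dec0.
  have qS : q \in S by apply: (cvS a q r) => //; [exact: RS | exact: dec0_ple].
  have qR : q \notin R.
    apply/negP => qR; have := rmin q qR (dec0_ple r).
    by apply/eqP; apply: dec0_ne.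
  set R' := R :|: [set z in S | ple q z].
  have R'S : {subset R' <= S} by move=> z; rewrite !inE => /orP [/RS|/andP[]].
  have qR' : q \in R' by rewrite !inE qS ple_refl orbT.
  case: (eqVneq R' S) => [e|ne].
    apply: (Q_A1 (a := q)); last by rewrite /q dec0_1.
    apply/pminP; split => // y yS yq; move: yS; rewrite -e !inE => /orP [yR|/andP [_ qy]].
      by case/negP: qR; apply: (up y q).
    exact: ple_anti.
  exfalso; apply: (NF1 (R' := R') (lam := lam) hNF).
  - split; first by apply/set0Pn; exists q.
    split.
      move=> x y z xR' zR' xy yz.
      have yS := cvS x y z (R'S _ xR') (R'S _ zR') xy yz.
      move: xR'; rewrite !inE yS => /orP [xR|/andP [_ qx]].
        by rewrite (up x y xR yS xy).
      by rewrite (ple_trans qx xy) orbT.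
    apply: (zz_hub (h := r)); first by rewrite !inE rR.
    move=> w; rewrite !inE => /orP [wR|/andP [wS qw]].
      by apply: (connect_mono (X := R)) => [z zR0|]; [rewrite !inE zR0 | exact: (proj1 (zzP R) zR r w rR wR)].
    apply: (connect_trans (y := q)).
      by apply: connect_edge; [rewrite !inE rR | exact: qR' | rewrite /comparable dec0_ple orbT].
    by apply: connect_edge; [exact: qR' | rewrite !inE wS qw orbT | rewrite /comparable qw].
  - by apply/negP => /eqP e; case/negP: qR; rewrite -e.
  - exact: ne.
  - by move=> x y xy xR _ yR'; apply: (up x y xR (R'S _ yR') xy).
  - by move=> x y xy _ _ xR; rewrite !inE xR.
  - move=> x y xy; rewrite !inE => /orP [xR|/andP [_ qx]] _ yS.
      by rewrite (up x y xR yS xy).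
    by rewrite yS (ple_trans qx xy) orbT.
  - by move=> x y xy _ _ /R'S.
  - by move=> x xR xS; split; [rewrite !inE xR | exact: cR].
split => //; apply/subsetP => c' cc.
have [cR' [x xR xc] [[a am e]|[c0 dR]]] := cover_cases cc.
  by apply: (Q_same (a := a)) => //; move/subsetP: minQ; apply.
have cS : c' \notin S by apply/negP => cS; case/negP: cR'; apply: (up x c').
have [b bm e] := above_max cvS c0 (RS _ dR) cS (ex_intro2 _ _ x (RS _ xR) xc).
exact: (Q_B1 bm e).
Qed.


Lemma caseB (S R : {set P}) (c : P -> F) (lam : F) : spread S -> spread R ->
  {subset S <= R} -> R != S -> (forall x y, y \in R -> x \in S -> ple y x -> y \in S) ->
  (forall z, z \in S -> c z = lam) -> NF R S c ->
  pmin R \subset Qset S /\ pcover R \subset Qset S.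
Proof.
move=> sS sR SR nRS dn cS hNF.
have [S0 [cvS zzS]] := sS; have [_ [cvR zzR]] := sR.
have B1 : forall x0 s0, x0 \in R -> x0 \notin S -> s0 \in S -> ple s0 x0 ->
    forall y, y \in R -> y \notin S -> ple y x0.
  move=> x0 s0 x0R x0S s0S s0x y yR yS.
  set R' := S :|: [set z in R | ple z x0].
  have R'R : {subset R' <= R} by move=> z; rewrite !inE => /orP [/SR|/andP[]].
  have x0R' : x0 \in R' by rewrite !inE x0R ple_refl orbT.
  case: (eqVneq R' R) => [e|ne].
    by move: yR; rewrite -e !inE (negPf yS) /= => /andP [].
  exfalso; apply: (NF1 (R' := R') (lam := lam) hNF).
  - split; first by apply/set0Pn; exists x0.
    split.
      move=> x y' z xR' zR' xy yz.
      have yR' := cvR x y' z (R'R _ xR') (R'R _ zR') xy yz.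
      move: zR'; rewrite !inE yR' => /orP [zS|/andP [_ zx]].
        by rewrite (dn z y' yR' zS yz).
      by rewrite (ple_trans yz zx) orbT.
    apply: (zz_hub (h := s0)); first by rewrite !inE s0S.
    move=> w; rewrite !inE => /orP [wS|/andP [wR wx]].
      by apply: (connect_mono (X := S)) => [z zS0|]; [rewrite !inE zS0 | exact: (proj1 (zzP S) zzS s0 w s0S wS)].
    apply: (connect_trans (y := x0)).
      by apply: connect_edge; [rewrite !inE s0S | exact: x0R' | rewrite /comparable s0x].
    by apply: connect_edge; [exact: x0R' | rewrite !inE wR wx orbT | rewrite /comparable wx orbT].
  - exact: ne.
  - by apply/negP => /eqP e; case/negP: x0S; rewrite -e.
  - by move=> x y' xy _ _ /R'R.
  - move=> x y' xy _; rewrite !inE => /orP [yS'|/andP [_ yx]] xR.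
      by rewrite (dn y' x xR yS' xy).
    by rewrite xR (ple_trans xy yx) orbT.
  - by move=> x y' xy _ _ yS'; rewrite !inE yS'.
  - by move=> x y' xy _ yS' xR'; apply: (dn y' x (R'R _ xR') yS' xy).
  - by move=> x xR xS; split; [rewrite !inE xS | exact: cS].
have hex : [exists x0, [&& x0 \in R, x0 \notin S & [exists s2 in S, ple s2 x0]]].
  have [s1 s1S] : exists s1, s1 \in S by case/set0Pn: S0 => s1; exists s1.
  apply: contraT => hn.
  have RS : {subset R <= S}.
    apply: (conn_closed (x0 := s1)) zzR _ _ _ => //.
    move=> a b aS bR cab; apply/negPn/negP => bS.
    case/orP: cab => ab.
      by case/negP: hn; apply/existsP; exists b; rewrite bR bS; apply/exists_inP; exists a.
    by case/negP: bS; apply: (dn a b bR aS ab).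
  by case/negP: nRS; apply/eqP/setP => z; apply/idP/idP; [apply: RS | apply: SR].
have [x0 /and3P [x0R x0S /exists_inP [s0 s0S s0x]]] := existsP hex.
have x0cov : x0 \in pcover S.
  apply/pminP; split; first by rewrite in_setD x0S /=; apply/upsetP; exists s0.
  move=> y; rewrite in_setD => /andP [yS /upsetP [s2 s2S s2y]] yx0.
  have yR : y \in R by apply: (cvR s2 y x0) => //; apply: SR.
  exact: ple_anti (B1 y s2 yR yS s2S s2y x0 x0R x0S).
have minQ : pmin R \subset Qset S.
  apply/subsetP => r /pminP [rR rmin].
  case: (boolP (r \in S)) => rS.
    apply: (Q_A (a := r)) => //; apply/pminP; split => // y yS yr.
    exact: rmin y (SR _ yS) yr.
  case: (posnP r.1) => [r0|r0]; first exact: Q_bot.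
  set q := dec0 r.
  case: (boolP [exists s2 in S, ple q s2]) => [/exists_inP [s2 s2S qs2]|hq].
    have [b bm s2b] := exists_max s2S.
    have bS : b \in S by case/pmaxP: bm.
    have qb := ple_trans qs2 s2b.
    apply: (Q_B1 bm); case: (leqP r.1 b.1) => h.
      by case/negP: rS; apply: (dn b r rR bS); apply: dec0_ple_up.
    move/pleP: qb => [h1 _] /=; apply/eqP; rewrite eqn_leq h /=.
    by rewrite -(dec0_1 r0) ltnS.
  have qnS : forall s2, s2 \in S -> ~~ ple q s2.
    by move=> s2 s2S; apply: contra hq => h; apply/exists_inP; exists s2.
  have qR : q \notin R.
    apply/negP => qR; have := rmin q qR (dec0_ple r).
    by apply/eqP; apply: dec0_ne.
  set R' := R :|: [set z | ple q z && [exists w in R, ple z w]].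
  have qR' : q \in R' by rewrite !inE ple_refl /=; apply/orP; right; apply/exists_inP; exists r => //; apply: dec0_ple.
  have hullR : forall z, z \in R' -> exists2 w, w \in R & ple z w.
    by move=> z; rewrite !inE => /orP [zR0|/andP [_ /exists_inP [w wR zw]]]; [exists z => //; apply: ple_refl | exists w].
  exfalso; apply: (NF1 (R' := R') (lam := lam) hNF).
  - split; first by apply/set0Pn; exists q.
    split.
      move=> x y z xR' zR' xy yz.
      have [w wR zw] := hullR z zR'.
      move: xR'; rewrite !inE => /orP [xR|/andP [qx _]].
        by rewrite (cvR x y w xR wR xy (ple_trans yz zw)).
      by rewrite (ple_trans qx xy) /=; apply/orP; right; apply/exists_inP; exists w => //; apply: ple_trans yz zw.
    apply: (zz_hub (h := r)); first by rewrite !inE rR.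
    move=> w; rewrite !inE => /orP [wR|/andP [qw hw]].
      by apply: (connect_mono (X := R)) => [z zR0|]; [rewrite !inE zR0 | exact: (proj1 (zzP R) zzR r w rR wR)].
    apply: (connect_trans (y := q)).
      by apply: connect_edge; [rewrite !inE rR | exact: qR' | rewrite /comparable dec0_ple orbT].
    by apply: connect_edge; [exact: qR' | rewrite !inE qw hw orbT | rewrite /comparable qw].
  - by apply/negP => /eqP e; case/negP: qR; rewrite -e.
  - by apply/negP => /eqP e; move: qR'; rewrite e => qS; case/negP: (qnS q qS); apply: ple_refl.
  - move=> x y xy xR _ yR'; have [w wR yw] := hullR y yR'.
    exact: (cvR x y w xR wR xy yw).
  - by move=> x y xy _ _ xR; rewrite !inE xR.
  - by move=> x y xy _ _ yS; rewrite !inE (SR _ yS).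
  - move=> x y xy _ yS; rewrite !inE => /orP [xR|/andP [qx _]].
      exact: (dn y x xR yS xy).
    by case/negP: (qnS y yS); apply: ple_trans qx xy.
  - by move=> x xR xS; split; [rewrite !inE xR | exact: cS].
split => //; apply/subsetP => c' cc.
have [cR' [x xR xc] [[a am e]|[c0 dR]]] := cover_cases cc.
  by apply: (Q_same (a := a)) => //; move/subsetP: minQ; apply.
have [w wm e] := above_max cvR c0 dR cR' (ex_intro2 _ _ x xR xc).
have wR : w \in R by case/pmaxP: wm.
case: (boolP (w \in S)) => wS.
  apply: (Q_B1 (b := w)) e; apply/pmaxP; split => // y yS wy.
  by case/pmaxP: wm => _ h; apply: h (SR _ yS) wy.
have wx0 : w = x0.
  by case/pmaxP: wm => _ h; apply/esym; apply: h x0R (B1 x0 s0 x0R x0S s0S s0x w wR wS).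
move: e; rewrite wx0 => e.
case: (S_cover cvS x0cov) => [[a am ea]|[b bm eb]].
  by apply: (Q_A1 am); rewrite ea.
by apply: (Q_B2 bm); rewrite eb.
Qed.


Lemma comb_main (S R : {set P}) (c : P -> F) : spread S -> spread R ->
  SH R S c -> NF R S c -> (R = S -> exists2 x, x \in S & c x = 0) ->
  pmin R \subset Qset S /\ pcover R \subset Qset S.
Proof.
move=> sS sR hSH hNF hRS.
have [_ [cvS zzS]] := sS; have [_ [cvR zzR]] := sR.
set D := R :&: S.
have F1 : forall x y, x \in D -> y \in D -> comparable x y -> c x = c y.
  move=> x y; rewrite !inE => /andP [xR xS] /andP [yR yS] /orP [] xy.
    by have [h1 _ _] := hSH x y xy; apply: h1.
  by have [h1 _ _] := hSH y x xy; symmetry; apply: h1.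
have F2 : forall x y, x \in D -> c x != 0 -> y \in S -> ple x y -> y \in R.
  move=> x y; rewrite !inE => /andP [xR xS] cx yS xy; apply/negPn/negP => yR.
  by have [_ h2 _] := hSH x y xy; rewrite (h2 xR xS yS yR) eqxx in cx.
have F3 : forall x y, y \in D -> c y != 0 -> x \in R -> ple x y -> x \in S.
  move=> x y; rewrite !inE => /andP [yR yS] cy xR xy; apply/negPn/negP => xS.
  by have [_ _ h3] := hSH x y xy; rewrite (h3 xR xS yR yS) eqxx in cy.
pose compo y := [set z | connect (eX D) y z].
have cP : forall y z, (z \in compo y) = connect (eX D) y z by move=> y z; rewrite inE.
have cself : forall y, y \in compo y by move=> y; rewrite cP connect0.
have cD : forall y z, y \in D -> z \in compo y -> z \in D.
  move=> y z yD; rewrite cP => /connect_pred; apply => //.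
  by move=> a b _ /and3P [].
have cconst : forall y z, y \in D -> z \in compo y -> c z = c y.
  move=> y z yD; rewrite cP => yz.
  have : (z \in D) && (c z == c y).
    apply: (connect_pred (Q := fun w => (w \in D) && (c w == c y))) yz _; last by rewrite yD eqxx.
    move=> a b /andP [aD /eqP ay] /and3P [_ bD ab]; rewrite bD /=.
    by rewrite -(F1 a b aD bD ab) ay.
  by case/andP => _ /eqP.
have cext : forall y z w, y \in D -> z \in compo y -> w \in D -> comparable z w -> w \in compo y.
  move=> y z w yD zC wD zw; have zD := cD y z yD zC.
  move: zC; rewrite !cP => yz; apply: connect_trans yz _.
  by apply: connect1; rewrite /eX zD wD zw.
have csame : forall y z, y \in D -> z \in compo y -> compo z = compo y.
  move=> y z yD zC; apply/setP => w; rewrite !cP; move: zC; rewrite cP => yz.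
  apply/idP/idP => h; first exact: connect_trans yz h.
  apply: connect_trans h; by rewrite (sym_connect_sym (@eX_sym _ _ _ D)).
have cspread : forall y, y \in D -> spread (compo y).
  move=> y yD; split; first by apply/set0Pn; exists y.
  split.
    move=> a z b aC bC az zb.
    have aD := cD y a yD aC; have bD := cD y b yD bC.
    move: (aD) (bD); rewrite !in_setI => /andP [aR aS] /andP [bR bS].
    have zD : z \in D by rewrite in_setI (cvR a z b aR bR az zb) (cvS a z b aS bS az zb).
    by apply: (cext y a z yD aC zD); rewrite /comparable az.
  apply: (zz_hub (h := y)) (cself y) _ => z; rewrite cP => yz.
  have : connect (eX (compo y)) y z && (z \in compo y).
    apply: (connect_pred (Q := fun w => connect (eX (compo y)) y w && (w \in compo y))) yz _;
      last by rewrite connect0 cself.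
    move=> a b /andP [ya aC] /and3P [_ bD ab].
    have bC := cext y a b yD aC bD ab.
    rewrite bC andbT; apply: connect_trans ya _.
    by apply: connect1; rewrite /eX aC bC ab.
  by case/andP.
have hex : [exists y, [&& y \in D, c y != 0 & (compo y == R) || (compo y == S)]].
  apply: contraT => hn.
  have hn' : forall y, y \in D -> c y != 0 -> (compo y != R) && (compo y != S).
    move=> y yD cy; rewrite -negb_or; apply: contra hn => h; apply/existsP; exists y.
    by rewrite yD cy h.
  pose Z := [set z in D | c z != 0].
  pose s' := undup [seq compo z | z <- enum Z].
  have hs' : forall k, (k < size s')%N -> exists2 z, z \in Z & nth set0 s' k = compo z.
    move=> k kl; have := mem_nth set0 kl; rewrite mem_undup => /mapP [z].
    by rewrite mem_enum => zZ ->; exists z.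
  exfalso; apply: (hNF s' (fun _ _ => 1) (fun _ => c)).
    move=> k kl; have [z zZ ->] := hs' k kl.
    move: zZ; rewrite inE => /andP [zD cz].
    have /andP [n1 n2] := hn' z zD cz.
    split => //; first exact: cspread.
    - apply: SH_const.
        by move=> x y xy _ _ yC; move: (cD z y zD yC); rewrite in_setI => /andP [].
      move=> x y xy yR yC xR.
      have yD := cD z y zD yC.
      have cy : c y != 0 by rewrite (cconst z y zD yC).
      have xS := F3 x y yD cy xR xy.
      have xD : x \in D by rewrite in_setI xR xS.
      by apply: (cext z y x zD yC xD); rewrite /comparable xy orbT.
    - move=> x y xy; split.
      + by move=> xC _ yC _; apply: F1; [exact: cD xC | exact: cD yC | rewrite /comparable xy].
      + move=> xC xS yS yC; exfalso; move/negP: yC; apply.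
        have xD := cD z x zD xC.
        have cx : c x != 0 by rewrite (cconst z x zD xC).
        have yR := F2 x y xD cx yS xy.
        have yD : y \in D by rewrite in_setI yR yS.
        by apply: (cext z x y zD xC yD); rewrite /comparable xy.
      + by move=> xC /negP []; move: (cD z x zD xC); rewrite in_setI => /andP [].
  move=> x xR xS.
  have xD : x \in D by rewrite in_setI xR xS.
  case: (eqVneq (c x) 0) => [c0|cx].
    by rewrite c0 big1 // => k _; rewrite mulr0.
  have xZ : x \in Z by rewrite inE xD cx.
  have cin : compo x \in s' by rewrite mem_undup; apply/mapP; exists x; rewrite ?mem_enum.
  have il : (index (compo x) s' < size s')%N by rewrite index_mem.
  rewrite (bigD1 (Ordinal il)) /=; last by rewrite nth_index.
  rewrite big1 ?addr0 ?mul1r // => k /andP [xk kne].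
  exfalso; move/negP: kne; apply.
  have [z zZ ez] := hs' k (ltn_ord k).
  move: zZ; rewrite inE => /andP [zD _].
  have e2 : compo x = compo z by apply: csame; rewrite // -ez.
  apply/eqP/val_inj => /=.
  apply/eqP; rewrite -(nth_uniq set0 (ltn_ord k) il (undup_uniq _)) nth_index //.
  by rewrite ez e2.
have [y /and3P [yD cy /orP [/eqP eR|/eqP eS]]] := existsP hex.
- have RS : {subset R <= S} by move=> z; rewrite -eR => /(cD y z yD); rewrite in_setI => /andP [].
  apply: (caseA (c := c) (lam := c y)) => //.
  + apply/negP => /eqP e; have [x xS cx0] := hRS e.
    have xC : x \in compo y by rewrite eR e.
    by move: cy; rewrite -(cconst y x yD xC) cx0 eqxx.
  + move=> x z xR zS xz.
    have xD : x \in D by rewrite in_setI xR (RS _ xR).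
    have xC : x \in compo y by rewrite eR.
    by apply: (F2 x z xD _ zS xz); rewrite (cconst y x yD xC).
  + by move=> z; rewrite -eR; apply: cconst.
- have SR : {subset S <= R} by move=> z; rewrite -eS => /(cD y z yD); rewrite in_setI => /andP [].
  apply: (caseB (c := c) (lam := c y)) => //.
  + apply/negP => /eqP e; have [x xS cx0] := hRS e.
    have xC : x \in compo y by rewrite eS.
    by move: cy; rewrite -(cconst y x yD xC) cx0 eqxx.
  + move=> x z zR xS zx.
    have xD : x \in D by rewrite in_setI (SR _ xS) xS.
    have xC : x \in compo y by rewrite eS.
    by apply: (F3 z x xD _ zR zx); rewrite (cconst y x yD xC).
  + by move=> z; rewrite -eS; apply: cconst.
Qed.



End Comb2.

Theorem mainTheorem16 (F : fieldType) (m0 n : nat) (m : 'I_n -> nat)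
  (S : {set pt m0 m}) :
  spread S ->
  [/\ pmin S \subset Qset S,
      pcover S \subset Qset S &
      forall (s : seq {set pt m0 m}) (rho : rhom (dsum F s) (dsum F [:: S])),
        min_spread_rad_approx rho ->
        forall R : {set pt m0 m}, spread R ->
          direct_summand (spread_rep F R) (dsum F s) ->
          pmin R \subset Qset S /\ pcover R \subset Qset S].
Proof.
move=> sS; split.
- exact: S_min.
- exact: (S_coverQ (proj1 (proj2 sS))).
- move=> s rho hrho R sR ds.
  have [sp hr _ _] := hrho.
  have [j ej] := summand_index sR sp ds.
  have hNF : NF (nth set0 s j) S (sc (fj rho j)) by apply: rep_NF.
  have hSH := hom_SH (fj_hom (rho := rho) j hr).
  rewrite -ej; apply: (comb_main (c := sc (fj rho j))) => //; first by rewrite ej.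
  by move=> e; apply: rep_RS hrho j e.
Qed.
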